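(* Let $\mathbb{K}$ be a field, let $A\in\mathbb{K}[x]^{m\times n}$ have full rank $m\le n$, let $s\in\mathbb{Z}^n$, let $P\in\mathbb{K}[x]^{m\times n}$ be the $s$-Popov form of $A$, and let $\pi=\rho_s(A)$ be the $s$-pivot index of $P$. Then $A_{*,\pi}\in\mathbb{K}[x]^{m\times m}$ is nonsingular, $P_{*,\pi}$ is its $s_\pi$-Popov form, and $U=P_{*,\pi}A_{*,\pi}^{-1}\in\mathbb{K}[x]^{m\times m}$ is the unique unimodular matrix such that $UA=P$. Furthermore: (i) $\deg(P)\le\deg(A)+\mathrm{amp}(s)$; (ii) for $1\le i\le m$, the $i$th column of $U$ has degree at most $|\mathrm{rdeg}(A)|-\deg(A_{i,*})$; (iii) $\deg(U)\le|\mathrm{cdeg}(A_{*,\pi})|$; (iv) $\deg(P)\le\min(|\mathrm{rdeg}(A)|,|\mathrm{cdeg}(A')|)\le m\deg(A)$, where $A'$ is $A$ with its zero columns removed.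
   Context: For a tuple $t=(t_1,\dots,t_k)$, $|t|=t_1+\dots+t_k$ and $\mathrm{amp}(t)=\max(t)-\min(t)$. $\mathrm{rdeg}(M)$ and $\mathrm{cdeg}(M)$ are the tuples of row degrees and column degrees of $M$; $\deg(M)$ is the maximum degree of its entries; $A_{i,*}$ is the $i$th row, $A_{*,J}$ the submatrix of columns indexed by the tuple $J$, and $s_J$ the corresponding subtuple of $s$. A square polynomial matrix is unimodular if it has an inverse with polynomial entries. For a shift $s\in\mathbb{Z}^n$ and a nonzero row $p=[p_1,\dots,p_n]\in\mathbb{K}[x]^{1\times n}$, the $s$-degree is $\max_j(\deg(p_j)+s_j)$, the $s$-pivot index is the largest $j$ with $\deg(p_j)+s_j$ equal to the $s$-degree, and $p_j$ is the $s$-pivot entry. A matrix $P\in\mathbb{K}[x]^{k\times n}$ is in $s$-Popov form if it has no zero row, the $s$-pivot indices of its rows are strictly increasing, its $s$-pivot entries are monic, and in each column containing an $s$-pivot entry all other entries have degree strictly less than that $s$-pivot entry. The $s$-Popov form of a matrix $A$ of rank $r$ is the unique matrix in $\mathbb{K}[x]^{r\times n}$ in $s$-Popov form whose rows generate the same $\mathbb{K}[x]$-module as those of $A$; $\rho_s(A)$, the $s$-pivot support of $A$, is the tuple of $s$-pivot indices of the rows of this form. *)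

(* Defs.v *)
From HB Require Import structures.
From mathcomp Require Import all_boot all_order all_algebra.
Set Implicit Arguments. Unset Strict Implicit. Unset Printing Implicit Defensive.
Import Order.TTheory GRing.Theory Num.Theory.
Local Open Scope ring_scope.

Section PopovDefs.
Variable K : fieldType.

(* degree of a polynomial; the zero polynomial gets degree 0 here, which is
   harmless below since all degrees taken are of nonzero rows/columns/matrices; comparisons involving -infinity are written with size *)
Definition pdeg (p : {poly K}) : nat := (size p).-1.

Definition deg_mx m n (M : 'M[{poly K}]_(m, n)) : nat :=
  \max_(i < m) \max_(j < n) pdeg (M i j).
Definition rdeg m n (M : 'M[{poly K}]_(m, n)) (i : 'I_m) : nat :=
  \max_(j < n) pdeg (M i j).
Definition cdeg m n (M : 'M[{poly K}]_(m, n)) (j : 'I_n) : nat :=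
  \max_(i < m) pdeg (M i j).
Definition sum_rdeg m n (M : 'M[{poly K}]_(m, n)) : nat :=
  \sum_(i < m) rdeg M i.
Definition sum_cdeg m n (M : 'M[{poly K}]_(m, n)) : nat :=
  \sum_(j < n) cdeg M j.
Definition sum_cdeg_nz m n (M : 'M[{poly K}]_(m, n)) : nat :=
  \sum_(j < n | col j M != 0) cdeg M j.

Definition is_spivot n (s : 'I_n -> int) (p : 'I_n -> {poly K}) (j : 'I_n) :=
  [/\ p j != 0,
      forall k, p k != 0 -> (pdeg (p k))%:Z + s k <= (pdeg (p j))%:Z + s j &
      forall k : 'I_n, (j < k)%N -> p k != 0 ->
        (pdeg (p k))%:Z + s k < (pdeg (p j))%:Z + s j].

Definition is_sPopov k n (s : 'I_n -> int) (P : 'M[{poly K}]_(k, n))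
    (pi : 'I_k -> 'I_n) :=
  [/\ forall i, row i P != 0,
      forall i, is_spivot s (fun j => P i j) (pi i),
      forall i i' : 'I_k, (i < i')%N -> (pi i < pi i')%N,
      forall i, P i (pi i) \is monic &
      forall i i', i' != i -> (size (P i' (pi i)) < size (P i (pi i)))%N].

Definition same_rowmod m k n (A : 'M[{poly K}]_(m, n)) (P : 'M[{poly K}]_(k, n)) :=
  (exists V : 'M[{poly K}]_(k, m), P = V *m A) /\
  (exists W : 'M[{poly K}]_(m, k), A = W *m P).

Definition sPopov_form_of m k n (s : 'I_n -> int) (A : 'M[{poly K}]_(m, n))
    (P : 'M[{poly K}]_(k, n)) :=
  (exists pi, is_sPopov s P pi) /\ same_rowmod A P.

End PopovDefs.

(* amplitude of a shift: max(s) - min(s) = max over pairs of |s_i - s_j| *)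
Definition amp n (s : 'I_n -> int) : nat :=
  \max_(i < n) \max_(j < n) `|s i - s j|%N.

Definition fracmx (K : fieldType) m n (M : 'M[{poly K}]_(m, n)) :
  'M[{fraction {poly K}}]_(m, n) := map_mx (@tofrac _) M.

(* Main.v *)
From HB Require Import structures.
From mathcomp Require Import all_boot all_order all_algebra.
From mathcomp Require Import fingroup perm zify.
Require Import Defs.
Import Order.TTheory GRing.Theory Num.Theory.
Local Open Scope ring_scope.
Set Implicit Arguments. Unset Strict Implicit.

Section Helpers.
Variable K : fieldType.
Implicit Types p q : {poly K}.

Lemma pdegE p b : (pdeg p <= b)%N = (size p <= b.+1)%N.
Proof. rewrite /pdeg; case: (size p) => //. Qed.

Lemma pdeg_size p : p != 0 -> size p = (pdeg p).+1.
Proof. rewrite -size_poly_eq0 /pdeg; case: (size p) => //. Qed.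

Lemma pdeg_mul_le p q : (pdeg (p * q) <= pdeg p + pdeg q)%N.
Proof.
rewrite pdegE; apply: leq_trans (size_polyMleq _ _) _.
rewrite /pdeg; case: (size p) => [|a]; case: (size q) => [|b] //=; lia.
Qed.

Lemma pdeg_mul_eq p q : p != 0 -> q != 0 -> pdeg (p * q) = (pdeg p + pdeg q)%N.
Proof.
move=> hp hq; rewrite /pdeg size_mul // (pdeg_size hp) (pdeg_size hq) /pdeg /=.
lia.
Qed.

Lemma pdeg_sum_le (I : Type) (r : seq I) (P : pred I) (F : I -> {poly K}) b :
  (forall i, P i -> (pdeg (F i) <= b)%N) ->
  (pdeg (\sum_(i <- r | P i) F i) <= b)%N.
Proof.
move=> h; rewrite pdegE; elim/big_ind: _ => //.
  by rewrite size_poly0.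
  move=> x y hx hy; apply: leq_trans (size_polyD _ _) _; by rewrite geq_max hx hy.
by move=> i /h; rewrite pdegE.
Qed.

Lemma pdeg_prod_le (I : Type) (r : seq I) (P : pred I) (F : I -> {poly K}) :
  (pdeg (\prod_(i <- r | P i) F i) <= \sum_(i <- r | P i) pdeg (F i))%N.
Proof.
apply: (big_rec2 (fun x n => pdeg x <= n)%N) => [|i x n _ h].
  by rewrite /pdeg size_poly1.
apply: leq_trans (pdeg_mul_le _ _) _; by rewrite leq_add2l.
Qed.

Lemma pdeg_prod_eq (I : Type) (r : seq I) (P : pred I) (F : I -> {poly K}) :
  (forall i, P i -> F i != 0) ->
  \prod_(i <- r | P i) F i != 0 /\
  pdeg (\prod_(i <- r | P i) F i) = (\sum_(i <- r | P i) pdeg (F i))%N.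
Proof.
move=> h; apply: (big_rec2 (fun x n => x != 0 /\ pdeg x = n)) => [|i x n Pi [h1 h2]].
  by rewrite oner_neq0 /pdeg size_poly1.
split; first by rewrite mulf_neq0 // h.
by rewrite pdeg_mul_eq ?h // h2.
Qed.

Lemma size_sign k p : size ((-1) ^+ k * p) = size p.
Proof. rewrite -signr_odd; case: (odd k); by rewrite ?expr0 ?mul1r ?expr1 ?mulN1r ?size_polyN. Qed.

Lemma pdeg_sign k p : pdeg ((-1) ^+ k * p) = pdeg p.
Proof. by rewrite /pdeg size_sign. Qed.

Lemma pdeg0 : pdeg (0 : {poly K}) = 0%N.
Proof. by rewrite /pdeg size_poly0. Qed.

Lemma pdeg_le_size p q : (size p <= size q)%N -> (pdeg p <= pdeg q)%N.
Proof. rewrite /pdeg => h; lia. Qed.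



Lemma pdeg_cofactor_r m (M : 'M[{poly K}]_m) i j :
  (pdeg (cofactor M i j) <= \sum_(k | k != i) rdeg M k)%N.
Proof.
rewrite expand_cofactor; apply: pdeg_sum_le => s _.
rewrite pdeg_sign; apply: leq_trans (pdeg_prod_le _ _ _) _.
rewrite (eq_bigl (fun k => k != i)); last by move=> k; rewrite eq_sym.
apply: leq_sum => k _; exact: leq_bigmax.
Qed.

Lemma rdeg_tr m (M : 'M[{poly K}]_m) k : rdeg M^T k = cdeg M k.
Proof. by apply: eq_bigr => j _; rewrite mxE. Qed.

Lemma pdeg_cofactor_c m (M : 'M[{poly K}]_m) i j :
  (pdeg (cofactor M i j) <= \sum_(k | k != j) cdeg M k)%N.
Proof.
rewrite -cofactor_tr; apply: leq_trans (pdeg_cofactor_r M^T j i) _.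
by apply: leq_sum => k _; rewrite rdeg_tr.
Qed.

Lemma pdeg_det_r m (M : 'M[{poly K}]_m) :
  (pdeg (\det M) <= \sum_k rdeg M k)%N.
Proof.
rewrite /determinant; apply: pdeg_sum_le => s _.
rewrite pdeg_sign; apply: leq_trans (pdeg_prod_le _ _ _) _.
apply: leq_sum => k _; exact: leq_bigmax.
Qed.

Lemma pdeg_det_c m (M : 'M[{poly K}]_m) :
  (pdeg (\det M) <= \sum_k cdeg M k)%N.
Proof.
rewrite -det_tr; apply: leq_trans (pdeg_det_r M^T) _.
by apply: leq_sum => k _; rewrite rdeg_tr.
Qed.



Lemma det_colred m (Q : 'M[{poly K}]_m) :
  (forall c, Q c c \is monic) ->
  (forall r c, r != c -> (size (Q r c) < size (Q c c))%N) ->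
  \det Q \is monic /\ pdeg (\det Q) = (\sum_c pdeg (Q c c))%N.
Proof.
move=> hmon hcol.
set N := (\sum_c pdeg (Q c c))%N.
have [hD1 hD2] : \prod_i Q i i != 0 /\ pdeg (\prod_i Q i i) = N.
  by apply: pdeg_prod_eq => i _; exact: monic_neq0.
have hDm : \prod_i Q i i \is monic by apply: monic_prod => i _.
have hR : forall s : 'S_m, s != 1%g -> (size ((-1) ^+ s * \prod_i Q i (s i))%R <= N)%N.
  move=> s hs; rewrite size_sign.
  case: (boolP [forall i, Q i (s i) != 0]) => [/forallP hnz | ].
    have [hp hd] : \prod_i Q i (s i) != 0 /\
        pdeg (\prod_i Q i (s i))%R = (\sum_i pdeg (Q i (s i)))%N.
      by apply: pdeg_prod_eq => i _; exact: hnz.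
    rewrite (pdeg_size hp) hd.
    case: (pickP (fun i => s i != i)) => [i0 hi0 | h]; last first.
      exfalso; move/eqP: hs; apply; apply/permP => i; rewrite perm1.
      by move: (h i) => /negbFE/eqP.
    have hle : forall i, (pdeg (Q i (s i)) <= pdeg (Q (s i) (s i)))%N.
      move=> i; case: (eqVneq i (s i)) => [<-|ne] //.
      by apply: pdeg_le_size; apply: ltnW; apply: hcol.
    have hlt : (pdeg (Q i0 (s i0)) < pdeg (Q (s i0) (s i0)))%N.
      have := hcol i0 (s i0); rewrite eq_sym => /(_ hi0).
      rewrite (pdeg_size (hnz i0)) (pdeg_size (monic_neq0 (hmon (s i0)))).
      by rewrite ltnS.
    rewrite /N [X in (_ < X)%N](reindex_inj (@perm_inj _ s)) /=.
    rewrite (bigD1 i0) //= [X in (_ <= X)%N](bigD1 i0) //=.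
    rewrite -addSn; apply: leq_add => //; apply: leq_sum => i _; exact: hle.
  case/forallPn => i0; rewrite negbK => /eqP h0.
  by rewrite (bigD1 i0) //= h0 mul0r size_poly0.
have detE : \det Q = \prod_i Q i i + \sum_(s : 'S_m | s != 1%g) (-1) ^+ s * \prod_i Q i (s i).
  rewrite /determinant (bigD1 1%g) //=; congr (_ + _).
  by rewrite odd_perm1 expr0 mul1r; apply: eq_bigr => i _; rewrite perm1.
have hsz : (size (\sum_(s : 'S_m | s != 1%g) (-1) ^+ s * \prod_i Q i (s i))%R
             < size (\prod_i Q i i)%R)%N.
  rewrite (pdeg_size hD1) hD2 ltnS.
  elim/big_ind: _ => //; first by rewrite size_poly0.
  move=> x y hx hy; apply: leq_trans (size_polyD _ _) _; by rewrite geq_max hx hy.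
rewrite detE; split.
  by rewrite monicE lead_coefDl // -monicE.
by rewrite /pdeg size_polyDl // -/(pdeg _) hD2.
Qed.



Lemma pivot_lb m n (s : 'I_n -> int) (P : 'M[{poly K}]_(m,n)) (pi : 'I_m -> 'I_n) :
  (forall i, is_spivot s (fun j => P i j) (pi i)) ->
  (forall i i' : 'I_m, (i < i')%N -> (pi i < pi i')%N) ->
  forall (w : 'I_m -> {poly K}) i, w i != 0 ->
  exists j, (\sum_l w l * P l j) != 0 /\
    (pdeg (w i))%:Z + (pdeg (P i (pi i)))%:Z + s (pi i)
      <= (pdeg (\sum_l w l * P l j))%:Z + s j.
Proof.
move=> hpiv hinc w i hw.
pose key := fun l => (pdeg (w l))%:Z + (pdeg (P l (pi l)))%:Z + s (pi l).
case: (@arg_maxP _ _ _ i (fun l => w l != 0) key hw) => l0 hl0 hmax.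
have hmax' : forall l, w l != 0 -> key l <= key l0 by move=> l /hmax.
case: (@arg_maxnP _ l0 (fun l => (w l != 0) && (key l == key l0))
         (fun l => nat_of_ord l)) => [|ls /andP[hls /eqP hkey] hmx].
  by rewrite hl0 eqxx.
exists (pi ls).
have [hnz hle hlt] := hpiv ls.
set j := pi ls.
have hf : w ls * P ls j != 0 by rewrite mulf_neq0.
have hfd : pdeg (w ls * P ls j) = (pdeg (w ls) + pdeg (P ls j))%N by rewrite pdeg_mul_eq.
have hrest : (size (\sum_(l | l != ls) w l * P l j)%R < size (w ls * P ls j)%R)%N.
  rewrite (pdeg_size hf) ltnS.
  elim/big_ind: _ => //; first by rewrite size_poly0.
    move=> x y hx hy; apply: leq_trans (size_polyD _ _) _; by rewrite geq_max hx hy.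
  move=> l hl.
  case: (eqVneq (w l) 0) => [->|hwl]; first by rewrite mul0r size_poly0.
  case: (eqVneq (P l j) 0) => [->|hPl]; first by rewrite mulr0 size_poly0.
  have hp : w l * P l j != 0 by rewrite mulf_neq0.
  rewrite (pdeg_size hp) pdeg_mul_eq // hfd.
  have [_ hlel hltl] := hpiv l.
  have h1 := hlel j hPl.
  have h2 := hmax' l hwl.
  have h3 : (pdeg (w l))%:Z + (pdeg (P l j))%:Z + s j < key ls.
    case: (ltrP (key l) (key l0)) => hk.
      rewrite hkey; apply: le_lt_trans hk; rewrite /key; lia.
    have hkl : key l = key l0 by apply/eqP; rewrite eq_le h2 hk.
    have : (l <= ls)%N by apply: hmx; rewrite hwl hkl eqxx.
    rewrite leq_eqVlt => /orP [/eqP hv|hv].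
      have e : l = ls by apply: val_inj.
      by rewrite e eqxx in hl.
    have := hltl j (hinc _ _ hv) hPl.
    rewrite hkey -hkl /key => h4; lia.
  move: h3; rewrite /key /j; lia.
rewrite (bigD1 ls) //=; split; first by rewrite -size_poly_eq0 size_polyDl // size_poly_eq0.
have -> : pdeg (w ls * P ls j + \sum_(l | l != ls) w l * P l j) = pdeg (w ls * P ls j) by rewrite /pdeg size_polyDl.
rewrite hfd.
have := hmax' i hw; rewrite -hkey /key /j; lia.
Qed.

End Helpers.

Unset Implicit Arguments. Set Strict Implicit.

Theorem lemma5p1 (K : fieldType) (m n : nat) (A : 'M[{poly K}]_(m, n))
    (s : 'I_n -> int) (P : 'M[{poly K}]_(m, n)) (pi : 'I_m -> 'I_n) :
  (m <= n)%N ->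
  \rank (fracmx A) = m ->
  is_sPopov s P pi ->
  same_rowmod A P ->
  [/\ \det (colsub pi A) != 0,
      sPopov_form_of (fun j => s (pi j)) (colsub pi A) (colsub pi P),
      exists U : 'M[{poly K}]_m,
        [/\ fracmx U = fracmx (colsub pi P) *m invmx (fracmx (colsub pi A)),
            (U \in unitmx /\ U *m A = P),
            forall V : 'M[{poly K}]_m, V \in unitmx -> V *m A = P -> V = U,
            forall i : 'I_m, (cdeg U i <= sum_rdeg A - rdeg A i)%N &
            (deg_mx U <= sum_cdeg (colsub pi A))%N],
      (deg_mx P <= deg_mx A + amp s)%N &
      (deg_mx P <= minn (sum_rdeg A) (sum_cdeg_nz A))%N /\
      (minn (sum_rdeg A) (sum_cdeg_nz A) <= m * deg_mx A)%N].
Proof.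
move=> Hmn Hrank Hpop [[V HV] [W HW]].
case: (Hpop) => Hrow Hpiv Hinc Hmon Hcol.
have inj : forall X Y : 'M[{poly K}]_m, X *m A = Y *m A -> X = Y.
  move=> X Y hXY.
  have rf : row_free (fracmx A) by rewrite /row_free Hrank.
  have hf : fracmx X *m fracmx A = fracmx Y *m fracmx A by rewrite /fracmx -!map_mxM hXY.
  have e := row_free_inj rf hf.
  apply/matrixP => a b; move/matrixP: e => /(_ a b); rewrite !mxE => /eqP.
  by rewrite tofrac_eq => /eqP.
have WV : W *m V = 1%:M by apply: inj; rewrite -mulmxA -HV -HW mul1mx.
have VW : V *m W = 1%:M := mulmx1C WV.
have [Vu Wu] := mulmx1_unit VW.
have HVpi : colsub pi P = V *m colsub pi A by rewrite HV mulmx_colsub.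
have HWpi : colsub pi A = W *m colsub pi P by rewrite {1}HW mulmx_colsub.
have pinj : injective pi.
  move=> a b e; case: (ltngtP a b) => h; last exact: val_inj.
    by have := Hinc _ _ h; rewrite e ltnn.
  by have := Hinc _ _ h; rewrite e ltnn.
have hm : forall c, colsub pi P c c \is monic by move=> c; rewrite mxE.
have hc : forall r c, r != c -> (size (colsub pi P r c) < size (colsub pi P c c))%N.
  by move=> r c h; rewrite !mxE; apply: Hcol.
have [detPm detPd] := det_colred hm hc.
have detVu : \det V \is a GRing.unit by rewrite -unitmxE.
have detVnz : \det V != 0.
  by apply/eqP => h; move: detVu; rewrite h unitr0.
have detVd : pdeg (\det V) = 0%N.
  by move: detVu; rewrite poly_unitE => /andP [/eqP h _]; rewrite /pdeg h.
have detAnz : \det (colsub pi A) != 0.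
  apply/eqP => h; move: (monic_neq0 detPm); by rewrite HVpi det_mulmx h mulr0 eqxx.
have pdegA : pdeg (\det (colsub pi A)) = pdeg (\det (colsub pi P)).
  by rewrite HVpi det_mulmx pdeg_mul_eq // detVd.
have delta_le : forall c, (pdeg (colsub pi P c c) <= pdeg (\det (colsub pi A)))%N.
  by move=> c; rewrite pdegA detPd (bigD1 c) //= leq_addr.
have Pcol_le : forall k c, (pdeg (colsub pi P k c) <= pdeg (\det (colsub pi A)))%N.
  move=> k c; apply: leq_trans (delta_le c); case: (eqVneq k c) => [->|ne] //.
  by apply: pdeg_le_size; apply: ltnW; apply: hc.
have cramer : forall (x : 'I_m -> {poly K}) (y : {poly K}) k B,
    (forall l, (pdeg (x l) <= B)%N) ->
    \det (colsub pi A) * y = \sum_l colsub pi P k l * x l -> (pdeg y <= B)%N.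
  move=> x y k B hB e.
  case: (eqVneq y 0) => [->|hy]; first by rewrite pdeg0.
  have : (pdeg (\det (colsub pi A) * y) <= pdeg (\det (colsub pi A)) + B)%N.
    rewrite e; apply: pdeg_sum_le => l _; apply: leq_trans (pdeg_mul_le _ _) _.
    by apply: leq_add.
  by rewrite pdeg_mul_eq // leq_add2l.
have e1 : \det (colsub pi A) *: V = colsub pi P *m \adj (colsub pi A).
  by rewrite HVpi -mulmxA mul_mx_adj mul_mx_scalar.
have Vb : forall k i B, (forall l, (pdeg (\adj (colsub pi A) l i) <= B)%N) ->
    (pdeg (V k i) <= B)%N.
  move=> k i B hB; apply: (cramer (fun l => \adj (colsub pi A) l i) _ k B hB).
  by move/matrixP: e1 => /(_ k i); rewrite !mxE.
have rdeg_pi : forall k, (rdeg (colsub pi A) k <= rdeg A k)%N.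
  by move=> k; apply/bigmax_leqP => j _; rewrite mxE; exact: leq_bigmax.
have Vrow : forall k i, (pdeg (V k i) <= sum_rdeg A - rdeg A i)%N.
  move=> k i; apply: Vb => l; rewrite mxE.
  apply: leq_trans (pdeg_cofactor_r _ i l) _.
  rewrite /sum_rdeg [X in (_ <= X - _)%N](bigD1 i) //= addKn.
  by apply: leq_sum => r _; apply: rdeg_pi.
have Vcol : forall k i, (pdeg (V k i) <= sum_cdeg (colsub pi A))%N.
  move=> k i; apply: Vb => l; rewrite mxE.
  apply: leq_trans (pdeg_cofactor_c _ i l) _.
  by rewrite /sum_cdeg [X in (_ <= X)%N](bigD1 l) //= leq_addl.
have cdeg_pi : forall c, cdeg (colsub pi A) c = cdeg A (pi c).
  by move=> c; apply: eq_bigr => i _; rewrite mxE.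
have sumnz : sum_cdeg_nz A = (\sum_j cdeg A j)%N.
  rewrite [RHS](bigID (fun j => col j A != 0)) /= [X in (_ = _ + X)%N]big1 ?addn0 // => j.
  rewrite negbK => /eqP h; apply: big1 => i _.
  by move/matrixP: h => /(_ i 0); rewrite !mxE => ->; exact: pdeg0.
have sum_sub : forall S : {set 'I_n}, (\sum_(j in S) cdeg A j <= \sum_j cdeg A j)%N.
  by move=> S; rewrite [X in (_ <= X)%N](bigID (mem S)) /= leq_addr.
have sumpi : (\sum_c cdeg A (pi c))%N = \sum_(j in pi @: [set: 'I_m]) cdeg A j.
  rewrite big_imset; last by move=> a b _ _; apply: pinj.
  by apply: eq_bigl => c; rewrite inE.
have sumApi : sum_cdeg (colsub pi A) = (\sum_c cdeg A (pi c))%N.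
  by apply: eq_bigr => c _; rewrite cdeg_pi.
split.
- exact: detAnz.
- split.
    exists (fun c => c); split.
    + move=> i; apply/eqP => h; move/matrixP: h => /(_ 0 i); rewrite !mxE => e.
      by move: (monic_neq0 (Hmon i)); rewrite e eqxx.
    + move=> i; have [h1 h2 h3] := Hpiv i; split.
      * by rewrite mxE.
      * by move=> k; rewrite !mxE; apply: h2.
      * by move=> k hk; rewrite !mxE; apply: h3; apply: Hinc.
    + by [].
    + by move=> i; rewrite mxE.
    + by move=> i i' h; rewrite !mxE; apply: Hcol.
  split; [by exists V | by exists W].
- exists V; split.
  + rewrite HVpi /fracmx map_mxM mulmxK //.
    by rewrite unitmxE det_map_mx unitfE tofrac_eq0.
  + by split.
  + by move=> V' _ h; apply: inj; rewrite h HV.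
  + by move=> i; apply/bigmax_leqP => k _; exact: Vrow.
  + by apply/bigmax_leqP => k _; apply/bigmax_leqP => i _; exact: Vcol.
- apply/bigmax_leqP => i _; apply/bigmax_leqP => j' _.
  case: (eqVneq (P i j') 0) => [->|hP]; first by rewrite pdeg0.
  have [k hk] : exists k, W k i != 0.
    case: (pickP (fun k => W k i != 0)) => [k hk|h]; first by exists k.
    move/matrixP: VW => /(_ i i); rewrite !mxE eqxx /= big1 => [|k _].
      by move/eqP; rewrite eq_sym oner_eq0.
    by move: (h k) => /negbFE/eqP ->; rewrite mulr0.
  have [j [_ hdeg]] := pivot_lb Hpiv Hinc (w := fun l => W k l) hk.
  have eA : (\sum_l W k l * P l j) = A k j by rewrite HW mxE.
  rewrite eA in hdeg.
  have [_ h2 _] := Hpiv i.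
  have hP2 := h2 j' hP.
  have hAd : (pdeg (A k j) <= deg_mx A)%N.
    apply: leq_trans (leq_bigmax (F := fun j => pdeg (A k j)) j) _.
    exact: (leq_bigmax (F := fun i => \max_j pdeg (A i j)) k).
  have hsd : (`|s j - s j'|%N <= amp s)%N.
    apply: leq_trans (leq_bigmax (F := fun j' => `|s j - s j'|%N) j') _.
    exact: (leq_bigmax (F := fun i => \max_j' `|s i - s j'|%N) j).
  move: hdeg hP2 hAd hsd; lia.
- have rdeg_le : forall i, (rdeg A i <= sum_rdeg A)%N.
    by move=> i; rewrite /sum_rdeg (bigD1 i) //= leq_addr.
  split; last first.
    apply: leq_trans (geq_minl _ _) _; rewrite /sum_rdeg.
    have hr : forall i, (rdeg A i <= deg_mx A)%N.
      by move=> i; exact: (leq_bigmax (F := fun i => rdeg A i) i).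
    have : (\sum_(i < m) rdeg A i <= \sum_(i < m) deg_mx A)%N.
      by apply: leq_sum => i _; exact: hr.
    move/leq_trans; apply.
    by rewrite big_const_ord iter_addn_0 mulnC.
  apply/bigmax_leqP => k _; apply/bigmax_leqP => j _; rewrite leq_min; apply/andP; split.
    rewrite HV mxE; apply: pdeg_sum_le => i _; apply: leq_trans (pdeg_mul_le _ _) _.
    have h1 := Vrow k i.
    have h2 : (pdeg (A i j) <= rdeg A i)%N := leq_bigmax (F := fun j => pdeg (A i j)) j.
    have h3 := rdeg_le i.
    by rewrite -(subnK h3) leq_add.
  rewrite sumnz.
  case: (pickP (fun c => pi c == j)) => [c /eqP hcj | hnone].
    rewrite -hcj.
    have -> : P k (pi c) = colsub pi P k c by rewrite mxE.
    apply: leq_trans (Pcol_le k c) _.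
    apply: leq_trans (pdeg_det_c _) _.
    rewrite -/(sum_cdeg (colsub pi A)) sumApi sumpi; exact: sum_sub.
  have e2 : \det (colsub pi A) *: P = colsub pi P *m (\adj (colsub pi A) *m A).
    by rewrite {1}HV scalemxAl e1 mulmxA.
  have hB : (pdeg (P k j) <= sum_cdeg (colsub pi A) + cdeg A j)%N.
    apply: (cramer (fun l => (\adj (colsub pi A) *m A) l j) _ k); last first.
      by move/matrixP: e2 => /(_ k j); rewrite !mxE.
    move=> l; rewrite mxE; apply: pdeg_sum_le => i _.
    apply: leq_trans (pdeg_mul_le _ _) _; apply: leq_add.
      rewrite mxE; apply: leq_trans (pdeg_cofactor_c _ i l) _.
      by rewrite /sum_cdeg [X in (_ <= X)%N](bigD1 l) //= leq_addl.
    exact: (leq_bigmax (F := fun i => pdeg (A i j)) i).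
  apply: leq_trans hB _.
  rewrite sumApi sumpi addnC -big_setU1 /=; first exact: sum_sub.
  apply/imsetP => [[c _ hc0]]; by move: (hnone c); rewrite -hc0 eqxx.
Qed.
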